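(* Let $\pi_0$ be an irreducible representation of $\mathrm{SO}(V)$ (if $d$ is even, assume $\mathrm{char}\,\mathcal C\ne2$). Then $$\Gamma(\pi_0,\chi)=\chi(-2)^{-d}\,j(\pi_0,\chi)\cdot\begin{cases}\omega_{\pi_0}(-1)&d\text{ even},\\1&d\text{ odd},\end{cases}$$ where $j(\pi_0,\chi)\,\mathrm{id}_{\pi_0}=|\mathfrak g|^{-1/2}\sum_{g\in\mathrm{SO}(V),\,\det(\mathrm{id}+g)\ne0}\chi(\det(\mathrm{id}_V+g))\pi_0(g)$.
   Context: Let $\mathbb F$ be a finite field of odd cardinality $q$ and $\mathcal C$ an algebraically closed field of characteristic not dividing $q$ with fixed $\sqrt q$. Let $(V,\langle\cdot,\cdot\rangle)$ be a nondegenerate symmetric bilinear space over $\mathbb F$ of dimension $d$, $G(V)=\mathrm O(V)$, $\mathrm{SO}(V)=\{g\in\mathrm O(V):\det g=1\}$, $\mathfrak g$ the Lie algebra of $\mathrm O(V)$, $\chi:\mathbb F^\times\to\mathcal C^\times$ a character. For an irreducible representation $\pi$ of $\mathrm O(V)$, $\Gamma(\pi,\chi)$ is defined as follows. Doubling: $V^\square=V^+\oplus V^-$ with form $\langle v_1,v_2\rangle-\langle w_1,w_2\rangle$ on $v_1^++w_1^-,v_2^++w_2^-$; $V^\Delta=\{v^++v^-\}$; $\iota(g_1,g_2)(v^++w^-)=(g_1v)^++(g_2w)^-$; $P_V$ the stabilizer of $V^\Delta$ in $\mathrm O(V^\square)$, $N_V$ its unipotent radical, $w_V=\iota(\mathrm{id},-\mathrm{id})$;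 $I_V(\mu)=\{f:f(pg)=\mu(\det(p|_{V^\Delta}))f(g),\,p\in P_V\}$; $(M_V(\chi)f)(g)=|\mathfrak g|^{-1/2}\sum_{u\in N_V}f(w_Vug)$ maps $I_V(\chi)\to I_V(\chi^{-1})$; $Z_{V,\mu,\pi}(f)=\sum_{g\in\mathrm O(V)}f(\iota(g,\mathrm{id}))\pi(g)$; $f_{0,V}\in I_V(\chi)$ is supported on $P_V$ with $f_{0,V}(\mathrm{id})=1$; and $\Gamma(\pi,\chi)\,\mathrm{id}_\pi=Z_{V,\chi^{-1},\pi}(M_V(\chi)f_{0,V})$. Extension to $\mathrm{SO}(V)$: if $d$ is odd, $\Gamma(\pi_0,\chi):=\Gamma(\pi_0^+,\chi)$ where $\pi_0^+$ is the extension of $\pi_0$ to $\mathrm O(V)=\{\pm\mathrm{id}\}\times\mathrm{SO}(V)$ with $\pi_0^+(-\mathrm{id})=\mathrm{id}$. If $d$ is even: if $\pi_0$ extends to an irreducible representation $\pi_0'$ of $\mathrm O(V)$, $\Gamma(\pi_0,\chi):=\Gamma(\pi_0',\chi)$ (independent of the extension); otherwise $\Gamma(\pi_0,\chi):=\Gamma(\mathrm{Ind}_{\mathrm{SO}(V)}^{\mathrm O(V)}\pi_0,\chi)$ (this induced representation is irreducible). $\omega_{\pi_0}$ is the central character of $\pi_0$. *)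

(* Defs.v *)
From HB Require Import structures.
From mathcomp Require Import all_boot all_order all_algebra all_field.
Set Implicit Arguments. Unset Strict Implicit. Unset Printing Implicit Defensive.
Import GRing.Theory.
Local Open Scope ring_scope.

(* Conventions: V = column vectors 'cV[F]_d, <v,w> = v^T B w, with B the
   (symmetric, nondegenerate) Gram matrix.  Linear maps act on the left:
   g v = g *m v.  Representations pi : 'M[F]_d -> 'M[C]_n act on column
   vectors of C^n on the left, pi (g h) = pi g * pi h (values outside the
   group are irrelevant). *)

Section Defs.
Variables (F : finFieldType) (C : fieldType) (d : nat) (B : 'M[F]_d).

Definition isO (m : nat) (Bm : 'M[F]_m) (g : 'M[F]_m) : bool :=
  g^T *m Bm *m g == Bm.
Definition isSO (g : 'M[F]_d) : bool := isO B g && (\det g == 1).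

(* Lie algebra of O(V) and |g|^{1/2} := sqrtq ^ (log_q |g|) *)
Definition lieO : {set 'M[F]_d} :=
  [set X : 'M[F]_d | X^T *m B + B *m X == 0].
Definition lie_sqrt_card (sqrtq : C) : C :=
  sqrtq ^+ trunc_log #|F| #|lieO|.

Definition Bsq : 'M[F]_(d + d) := block_mx B 0 0 (- B).
Definition Delta : 'M[F]_(d + d, d) := col_mx 1%:M 1%:M.  (* basis of V^Delta *)
Definition restrD (G : 'M[F]_(d + d)) : 'M[F]_d := usubmx (G *m Delta).
  (* matrix of G|_{V^Delta} in the basis Delta, when G stabilizes V^Delta *)
Definition inP (G : 'M[F]_(d + d)) : bool :=
  isO Bsq G && (G *m Delta == Delta *m restrD G).
(* unipotent radical: trivial on V^Delta and on V^sq / V^Delta *)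
Definition inN (G : 'M[F]_(d + d)) : bool :=
  [&& isO Bsq G, (G - 1%:M) *m Delta == 0 &
      [exists M : 'M[F]_(d, d + d), G - 1%:M == Delta *m M]].
Definition wV : 'M[F]_(d + d) := block_mx 1%:M 0 0 (- 1%:M).
Definition iotaV (g1 g2 : 'M[F]_d) : 'M[F]_(d + d) := block_mx g1 0 0 g2.

Variables (sqrtq : C) (chi : F -> C).

Definition f0V (G : 'M[F]_(d + d)) : C :=
  if inP G then chi (\det (restrD G)) else 0.
Definition MV (f : 'M[F]_(d + d) -> C) (G : 'M[F]_(d + d)) : C :=
  (lie_sqrt_card sqrtq)^-1 * \sum_(u : 'M[F]_(d + d) | inN u) f (wV *m u *m G).
Definition ZV (n : nat) (pi : 'M[F]_d -> 'M[C]_n) (f : 'M[F]_(d + d) -> C)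
  : 'M[C]_n := \sum_(g : 'M[F]_d | isO B g) f (iotaV g 1%:M) *: pi g.
Definition GammaOp (n : nat) (pi : 'M[F]_d -> 'M[C]_n) : 'M[C]_n :=
  ZV pi (MV f0V).

Definition JOp (n : nat) (pi0 : 'M[F]_d -> 'M[C]_n) : 'M[C]_n :=
  (lie_sqrt_card sqrtq)^-1 *:
    \sum_(g : 'M[F]_d | isSO g && (\det (1%:M + g) != 0))
       chi (\det (1%:M + g)) *: pi0 g.

Definition is_rep (G : pred 'M[F]_d) (n : nat) (pi : 'M[F]_d -> 'M[C]_n) : Prop :=
  pi 1%:M = 1%:M /\ {in G &, forall g h, pi (g *m h) = pi g *m pi h}.
(* irreducible: nonzero, and no invariant subspace (column space of U)
   other than 0 and C^n *)
Definition is_irrep (G : pred 'M[F]_d) (n : nat) (pi : 'M[F]_d -> 'M[C]_n) : Prop :=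
  [/\ is_rep G pi, (0 < n)%N &
      forall U : 'M[C]_n,
        (forall g, G g -> ((pi g *m U)^T <= U^T)%MS) ->
        U = 0 \/ \rank U = n].

(* extension pi0^+ of pi0 to O(V) = {+-1} x SO(V) (d odd) *)
Definition plus_ext (n : nat) (pi0 : 'M[F]_d -> 'M[C]_n) (g : 'M[F]_d) : 'M[C]_n :=
  if isSO g then pi0 g else pi0 (- g).

(* a fixed element of O(V) \ SO(V) and the induced representation
   Ind_{SO}^{O} pi0, realised on functions f with f(s x) = pi0(s) f(x),
   coordinates (f(1), f(h)) *)
Definition hO : 'M[F]_d := odflt 1%:M [pick h | isO B h && (\det h != 1)].
Definition IndSO (n : nat) (pi0 : 'M[F]_d -> 'M[C]_n) (g : 'M[F]_d)
  : 'M[C]_(n + n) :=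
  if isSO g then block_mx (pi0 g) 0 0 (pi0 (hO *m g *m invmx hO))
  else block_mx 0 (pi0 (g *m invmx hO)) (pi0 (hO *m g)) 0.

(* "Gamma(pi0, chi) = c" for pi0 a representation of SO(V), following the
   extension of Gamma from O(V) to SO(V). *)
Definition GammaSO_eq (n : nat) (pi0 : 'M[F]_d -> 'M[C]_n) (c : C) : Prop :=
  if odd d then GammaOp (plus_ext pi0) = c%:M
  else
    (forall pi' : 'M[F]_d -> 'M[C]_n,
        is_irrep (isO B) pi' -> {in isSO, pi' =1 pi0} -> GammaOp pi' = c%:M)
    /\ ((~ exists pi' : 'M[F]_d -> 'M[C]_n,
            is_irrep (isO B) pi' /\ {in isSO, pi' =1 pi0}) ->
        GammaOp (IndSO pi0) = c%:M).

End Defs.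

(* Main.v *)
Require Import Defs.
From HB Require Import structures.
From mathcomp Require Import all_boot all_order all_algebra all_field.
Import GRing.Theory.
Local Open Scope ring_scope.
Set Implicit Arguments. Unset Strict Implicit. Unset Printing Implicit Defensive.

Section Core.
Variables (F : finFieldType) (d : nat) (B : 'M[F]_d).

Definition E : 'M[F]_(d, d + d) := row_mx 1%:M (- 1%:M).
Definition uX (X : 'M[F]_d) : 'M[F]_(d + d) := 1%:M + Delta F d *m X *m E.

Lemma ED : E *m Delta F d = 0.
Proof. by rewrite /E /Delta mul_row_col mulmx1 mulNmx mul1mx subrr. Qed.

Lemma DtBsq : (Delta F d)^T *m Bsq B = B *m E.
Proof.
rewrite /Delta /Bsq /E tr_col_mx trmx1 mul_row_block mul_mx_row !mul1mx.
by rewrite addr0 add0r mulmxN mulmx1.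
Qed.

Lemma BsqD : Bsq B *m Delta F d = E^T *m B.
Proof.
rewrite /Delta /Bsq /E tr_row_mx mul_block_col mul_col_mx.
by rewrite ?mulmx1 ?mulmx0 ?mul0mx ?mul1mx ?addr0 ?add0r linearN /= trmx1 mulNmx mul1mx.
Qed.

Lemma inN_form (u : 'M[F]_(d + d)) : inN B u -> exists X, u = uX X.
Proof.
case/and3P => _ /eqP H1 /existsP [M /eqP HM].
have eu : u = 1%:M + Delta F d *m M by rewrite -[u](subrK 1%:M) HM addrC.
rewrite HM /Delta mul_col_mx mul1mx mul_col_mx -/(Delta F d) in H1.
have HMD : M *m Delta F d = 0.
  by rewrite -col_mx0 in H1; case/eq_col_mx: H1.
move: HMD; rewrite -[M]hsubmxK /Delta mul_row_col !mulmx1 => /eqP.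
rewrite addr_eq0 => /eqP HR.
exists (lsubmx M).
by rewrite eu /uX -mulmxA /E mul_mx_row mulmxN mulmx1 HR opprK -HR hsubmxK.
Qed.
End Core.
Section Core2.
Variables (F : finFieldType) (d : nat) (B : 'M[F]_d).
Local Notation D := (Delta F d).
Local Notation E := (@E F d).

Lemma isO_uX (X : 'M[F]_d) : X^T *m B + B *m X = 0 -> isO (Bsq B) (uX X).
Proof.
move=> L.
have e1 : Bsq B *m (D *m X *m E) = E^T *m (B *m X) *m E by rewrite !mulmxA BsqD.
have e2 : (E^T *m (X^T *m D^T)) *m Bsq B = E^T *m (X^T *m B) *m E.
  by rewrite -!mulmxA DtBsq !mulmxA.
have e3 : (E^T *m (X^T *m D^T)) *m Bsq B *m (D *m X *m E) = 0.
  by rewrite e2 -!mulmxA [E *m (D *m _)]mulmxA ED mul0mx !mulmx0.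
rewrite /isO /uX [(_ + _)^T]linearD /= trmx1 !trmx_mul.
apply/eqP.
rewrite mulmxDl mul1mx !mulmxDr mulmx1 mulmxDl e1 e3 addr0 e2 -addrA -mulmxDl -mulmxDr.
by rewrite addrC L mulmx0 mul0mx add0r.
Qed.

End Core2.
Ltac simpm := rewrite ?(mulmx1, mulmx0, mul0mx, mul1mx, addr0, add0r, oppr0).

Section Core3.
Variables (F : finFieldType) (d : nat) (B : 'M[F]_d).
Local Notation D := (Delta F d).
Local Notation E := (@E F d).

Lemma inN_uX (X : 'M[F]_d) : X^T *m B + B *m X = 0 -> inN B (uX X).
Proof.
move=> L; have eu : uX X - 1%:M = D *m X *m E by rewrite /uX addrAC subrr add0r.
apply/and3P; split; first exact: isO_uX.
  by rewrite eu -mulmxA ED mulmx0.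
by apply/existsP; exists (X *m E); rewrite eu mulmxA.
Qed.

Lemma isO_mul m (M a b : 'M[F]_m) : isO M a -> isO M b -> isO M (a *m b).
Proof.
rewrite /isO => /eqP Ha /eqP Hb; apply/eqP.
by rewrite trmx_mul !mulmxA -(mulmxA b^T) -(mulmxA b^T) Ha.
Qed.

Lemma isO_wV : isO (Bsq B) (wV F d).
Proof.
rewrite /isO /wV /Bsq tr_block_mx !linearN /= !trmx0 trmx1 !mulmx_block.
rewrite ?mulmx1 ?mulmx0 ?mul0mx ?mul1mx ?addr0 ?add0r ?mulNmx ?mulmxN ?opprK ?oppr0.
by rewrite !mul0mx !mul1mx !mulmx1 oppr0.
Qed.

Lemma isO_iota (g : 'M[F]_d) : isO B g -> isO (Bsq B) (iotaV g 1%:M).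
Proof.
rewrite /isO => /eqP Hg.
rewrite /isO /iotaV /Bsq tr_block_mx !trmx0 trmx1 !mulmx_block.
rewrite ?mulmx1 ?mulmx0 ?mul0mx ?mul1mx ?addr0 ?add0r Hg.
by rewrite mul0mx.
Qed.

Lemma GD (g X : 'M[F]_d) :
  wV F d *m uX X *m iotaV g 1%:M *m D =
  col_mx (g + X *m (g - 1%:M)) (- (1%:M + X *m (g - 1%:M))).
Proof.
rewrite -!mulmxA.
have -> : iotaV g 1%:M *m D = col_mx g 1%:M.
  by rewrite /iotaV /Delta mul_block_col; simpm.
have -> : uX X *m col_mx g 1%:M = col_mx (g + X *m (g - 1%:M)) (1%:M + X *m (g - 1%:M)).
  rewrite /uX mulmxDl mul1mx -!mulmxA /E mul_row_col mulNmx; simpm.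
  by rewrite /Delta mul_col_mx mul1mx add_col_mx.
by rewrite /wV mul_block_col mulNmx; simpm.
Qed.

End Core3.
Section Core4.
Variables (F : finFieldType) (d : nat) (B : 'M[F]_d).
Local Notation D := (Delta F d).
Local Notation G g X := (wV F d *m uX X *m iotaV g 1%:M).

Lemma restrD_G g X : restrD (G g X) = g + X *m (g - 1%:M).
Proof. by rewrite /restrD GD col_mxKu. Qed.

Lemma inP_eq g X : inP B (G g X) -> g + X *m (g - 1%:M) = - (1%:M + X *m (g - 1%:M)).
Proof.
rewrite /inP restrD_G GD /Delta => /andP [_ /eqP].
by rewrite mul_col_mx; simpm; case/eq_col_mx => _ ->.
Qed.

Lemma inP_of g X : isO B g -> X^T *m B + B *m X = 0 ->
  g + X *m (g - 1%:M) = - (1%:M + X *m (g - 1%:M)) -> inP B (G g X).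
Proof.
move=> Og L e; apply/andP; split.
  by apply: isO_mul; [apply: isO_mul; [exact: isO_wV | exact: isO_uX] | exact: isO_iota].
rewrite restrD_G GD /Delta !mul_col_mx; simpm; by rewrite e.
Qed.
End Core4.
Lemma zm1 (V : zmodType) (a b c : V) : (- a - b) + (- a - c) = - (a *+ 2 + c + b).
Proof. by rewrite mulr2n !opprD addrACA addrA addrAC. Qed.
Lemma zm2 (V : zmodType) (k o y : V) : k + o + y = - (o + y) -> y *+ 2 = - k - o *+ 2.
Proof.
move=> e; have e0 : k + o + y + (o + y) = 0 by apply/eqP; rewrite addr_eq0 e.
move: e0; rewrite addrACA addrC => /eqP; rewrite addr_eq0 => /eqP; rewrite mulr2n => ->.
by rewrite mulr2n !opprD addrA.
Qed.

Lemma OgK_gen (F : finFieldType) d (B K : 'M[F]_d) :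
  isO B (K + 1%:M) -> K^T *m B *m K + K^T *m B + B *m K = 0.
Proof.
rewrite /isO [(_ + _)^T]linearD /= trmx1 mulmxDl mul1mx !mulmxDr mulmx1 !addrA.
by rewrite mulmxDl -subr_eq0 addrK addrAC => /eqP.
Qed.

Section Core5.
Variables (F : finFieldType) (C : fieldType) (d : nat) (B : 'M[F]_d) (chi : F -> C).
Local Notation D := (Delta F d).
Local Notation G g X := (wV F d *m uX X *m iotaV g 1%:M).

Lemma half_twice (h2 : (2%:R : F) != 0) m n (Z : 'M[F]_(m, n)) :
  (2%:R : F)^-1 *: (Z *+ 2) = Z.
Proof. by rewrite -scaler_nat scalerA mulVf // scale1r. Qed.

Lemma sum_N_unit K : isO B (K + 1%:M) -> (2%:R : F) != 0 -> K \in unitmx ->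
  \sum_(u | inN B u && inP B (wV F d *m u *m iotaV (K + 1%:M) 1%:M))
     chi (\det (restrD (wV F d *m u *m iotaV (K + 1%:M) 1%:M)))
  = chi (\det ((2%:R : F)^-1 *: K)).
Proof.
move=> Og h2 Ku.
move eH : ((2%:R : F)^-1 *: K) => H.
have hH : H *+ 2 = K by rewrite -eH -scaler_nat scalerA mulfV // scale1r.
move eY : (- H - 1%:M) => Y0.
move eX : (Y0 *m invmx K) => X0.
have XK : X0 *m K = Y0 by rewrite -eX mulmxKV.
have gY : K + 1%:M + Y0 = H.
  by rewrite -eY -hH mulr2n -addrA (addrCA 1%:M) subrr addr0 addrK.
have eq0 : K + 1%:M + Y0 = - (1%:M + Y0).
  by rewrite gY -eY (addrCA 1%:M) subrr addr0 opprK.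
have L0 : X0^T *m B + B *m X0 = 0.
  have OgK : K^T *m B *m K + K^T *m B + B *m K = 0 by apply: OgK_gen.
  have t1 : K^T *m (X0^T *m B) *m K = Y0^T *m B *m K by rewrite mulmxA -trmx_mul XK.
  have t2 : K^T *m (B *m X0) *m K = K^T *m B *m Y0 by rewrite mulmxA -mulmxA XK.
  have Z0 : K^T *m (X0^T *m B + B *m X0) *m K = 0.
    rewrite mulmxDr mulmxDl t1 t2 -eY [(_ - _)^T]linearB /= linearN /= trmx1 -eH linearZ /=.
    rewrite !mulmxBl !mulmxBr !mulNmx !mulmxN mul1mx mulmx1 -!scalemxAl -!scalemxAr.
    by rewrite zm1 scalerMnr half_twice // OgK oppr0.
  have KTu : K^T \in unitmx by rewrite unitmx_tr.
  rewrite -[_ + _](mulKmx KTu) -[K^T *m (_ + _)](mulmxK Ku) Z0.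
  by rewrite mul0mx mulmx0.
rewrite (eq_bigl (fun u => u == uX X0)) ?big_pred1_eq.
  by rewrite restrD_G addrK XK gY.
move=> u; apply/andP/eqP.
  case=> /inN_form [X ->] /inP_eq; rewrite addrK => e; congr uX.
  have eXK : X *m K = Y0.
    by rewrite -[X *m K](half_twice h2) (zm2 e) -eY scalerBr scalerN half_twice // eH.
  by rewrite -eX -eXK mulmxK.
by move=> ->; split; [exact: inN_uX | apply: inP_of => //; rewrite addrK XK].
Qed.

Lemma sum_N g : isO B g -> (2%:R : F) != 0 ->
  \sum_(u | inN B u) f0V B chi (wV F d *m u *m iotaV g 1%:M) =
  if \det (g - 1%:M) != 0 then chi (\det ((2%:R : F)^-1 *: (g - 1%:M))) else 0.
Proof.
move=> Og h2.
rewrite /f0V -big_mkcondr /=.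
case: ifP => [dK | /negbFE dK].
  have [K eK] : exists K, g = K + 1%:M by exists (g - 1%:M); rewrite subrK.
  subst g; rewrite addrK in dK *; apply: sum_N_unit => //.
  by rewrite unitmxE unitfE.
rewrite big_pred0 // => u; apply/negbTE/negP => /andP [/inN_form [X ->]] /inP_eq e.
rewrite -det_tr in dK; case/det0P: dK => v vn0 hv.
have hw : (g - 1%:M) *m v^T = 0 by rewrite -[g - 1%:M]trmxK -trmx_mul hv trmx0.
have gw : g *m v^T = v^T by apply/eqP; rewrite -subr_eq0 -{2}[v^T]mul1mx -mulmxBl hw.
have := congr1 (mulmx^~ v^T) e.
rewrite /= mulmxDl -mulmxA hw mulmx0 addr0 gw mulNmx mulmxDl mul1mx -mulmxA hw mulmx0 addr0.
move=> ew.
have w0 : v^T = 0.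
  by rewrite -(half_twice h2 v^T) [v^T *+ 2]mulr2n {1}ew addNr scaler0.
by move: vn0; rewrite -[v]trmxK w0 trmx0 eqxx.
Qed.
End Core5.

Section Chi.
Variables (F : fieldType) (C : fieldType) (chi : F -> C).
Hypothesis chiM : forall x y : F, x != 0 -> y != 0 -> chi (x * y) = chi x * chi y.
Hypothesis chiNZ : forall x : F, x != 0 -> chi x != 0.

Lemma chi1 : chi 1 = 1.
Proof.
apply: (mulfI (chiNZ (oner_neq0 F))).
by rewrite -chiM ?oner_neq0 // mulr1 mulr1.
Qed.

Lemma chiV a : a != 0 -> chi a^-1 = (chi a)^-1.
Proof.
move=> a0; apply: (mulfI (chiNZ a0)).
by rewrite -chiM ?invr_eq0 // mulfV // mulfV ?chiNZ // chi1.
Qed.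

Lemma chiX a k x : a != 0 -> x != 0 -> chi (a ^+ k * x) = chi a ^+ k * chi x.
Proof.
move=> a0 x0; elim: k => [|k IH]; first by rewrite !expr0 !mul1r.
by rewrite !exprS -!mulrA chiM ?IH // mulf_neq0 // expf_neq0.
Qed.
End Chi.

Section Gam.
Variables (F : finFieldType) (C : fieldType) (d : nat) (B : 'M[F]_d)
  (sqrtq : C) (chi : F -> C).
Hypothesis chiM : forall x y : F, x != 0 -> y != 0 -> chi (x * y) = chi x * chi y.
Hypothesis chiNZ : forall x : F, x != 0 -> chi x != 0.
Hypothesis h2 : (2%:R : F) != 0.
Hypothesis detB : \det B != 0.

Lemma isON (h : 'M[F]_d) : isO B (- h) = isO B h.
Proof. by rewrite /isO [(- _)^T]linearN /= mulNmx mulmxN mulNmx opprK. Qed.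

Lemma detSO (h : 'M[F]_d) : isO B h -> \det (1%:M + h) != 0 -> \det h = 1.
Proof.
rewrite /isO => /eqP Oh nz.
have e : (1%:M + h)^T *m B *m h = B *m (1%:M + h).
  by rewrite [(_ + _)^T]linearD /= trmx1 mulmxDl mul1mx mulmxDl Oh mulmxDr mulmx1 addrC.
have := congr1 determinant e; rewrite !det_mulmx det_tr => e2.
apply: (mulfI (mulf_neq0 detB nz)).
by rewrite mulr1 [\det B * _]mulrC e2 mulrC.
Qed.

Lemma detN m (R : comNzRingType) (A : 'M[R]_m) : \det (- A) = (-1) ^+ m * \det A.
Proof. by rewrite -scaleN1r detZ. Qed.

Lemma detN1 (h : 'M[F]_d) : (\det (- h - 1%:M : 'M[F]_d) != 0) = (\det (1%:M + h) != 0).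
Proof.
rewrite -opprD addrC detN mulf_eq0 negb_or andb_idl // => _.
by rewrite expf_neq0 // oppr_eq0 oner_eq0.
Qed.

Lemma chidet (h : 'M[F]_d) : \det (1%:M + h) != 0 ->
  chi (\det ((2%:R : F)^-1 *: (- h - 1%:M))) = (chi (- 2%:R)) ^- d * chi (\det (1%:M + h)).
Proof.
move=> nz.
rewrite -opprD addrC scalerN detN detZ mulrA -exprMn mulN1r -invrN chiX //.
  by rewrite chiV ?oppr_eq0 // exprVn.
by rewrite invr_eq0 oppr_eq0.
Qed.

Lemma Gamma_formula n (pi : 'M[F]_d -> 'M[C]_n) :
  GammaOp B sqrtq chi pi =
  ((chi (- 2%:R)) ^- d * (lie_sqrt_card B sqrtq)^-1) *:
    \sum_(h | isSO B h && (\det (1%:M + h) != 0)) chi (\det (1%:M + h)) *: pi (- h).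
Proof.
rewrite /GammaOp /ZV /MV.
rewrite (eq_bigr (fun g => if \det (g - 1%:M) != 0 then
   ((lie_sqrt_card B sqrtq)^-1 * chi (\det ((2%:R : F)^-1 *: (g - 1%:M)))) *: pi g else 0)); last first.
  by move=> g Og; rewrite sum_N //; case: ifP => _; rewrite ?mulr0 ?scale0r.
rewrite -big_mkcondr (reindex_inj oppr_inj) /= scaler_sumr.
apply: eq_big => h.
  rewrite isON detN1 /isSO; apply/andP/andP => [[Oh nz]|[/andP [Oh _] nz]] //.
  by split => //; rewrite Oh (detSO Oh nz) eqxx.
move=> /andP [_ nz]; rewrite detN1 in nz.
by rewrite chidet // scalerA mulrCA mulrA.
Qed.
End Gam.

Lemma two_neq0 (F : finFieldType) : odd #|F| -> (2%:R : F) != 0.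
Proof.
move=> oddF; apply/negP => /eqP h2.
have c2 : (2 \in [pchar F])%N by rewrite inE /= h2 eqxx.
have e : #|F| = (2 ^ logn 2 #|pPrimeCharType c2|)%N := card_pprimeChar c2.
move: oddF; rewrite e oddX orbF => /eqP e0.
move: (finNzRing_gt1 F); rewrite e e0.
by [].
Qed.

Lemma schur_scalar (F : finFieldType) (C : closedFieldType) (d : nat)
  (G : pred 'M[F]_d) (n : nat) (pi : 'M[F]_d -> 'M[C]_n) (A : 'M[C]_n) :
  is_irrep G pi -> (forall g, G g -> pi g *m A = A *m pi g) ->
  exists a : C, A = a%:M.
Proof.
case=> _ n0 Hirr Hcom.
have [a Ha] : exists a, root (char_poly A) a.
  by apply/closed_rootP; rewrite size_char_poly; by case: (n) n0.
rewrite -eigenvalue_root_char in Ha.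
case/eigenvalueP: Ha => v Hv vn0.
exists a.
have U0 : (a%:M - A) = 0 \/ \rank (a%:M - A) = n.
  apply: Hirr => g Gg.
  have -> : pi g *m (a%:M - A) = (a%:M - A) *m pi g.
    by rewrite mulmxBr mulmxBl Hcom // scalar_mxC.
  by rewrite trmx_mul submxMl.
case: U0 => [/eqP| Hr].
  by rewrite subr_eq0 => /eqP.
exfalso.
have : \det (a%:M - A) == 0.
  apply/det0P; exists v => //.
  by rewrite mulmxBr Hv mul_mx_scalar subrr.
have : (a%:M - A) \in unitmx by rewrite -row_free_unit /row_free Hr.
by rewrite unitmxE unitfE => /negbTE ->.
Qed.

Section Conj.
Variables (F : finFieldType) (d : nat) (B : 'M[F]_d).
Hypothesis detB : \det B != 0.

Lemma isO_unit (a : 'M[F]_d) : isO B a -> a \in unitmx.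
Proof.
rewrite /isO => /eqP Oa; rewrite unitmxE unitfE.
apply/negP => /eqP a0; move/negP: detB; apply.
by rewrite -Oa !det_mulmx det_tr a0 mul0r mulr0.
Qed.

Lemma conj_inj (a : 'M[F]_d) : a \in unitmx -> injective (fun k : 'M[F]_d => invmx a *m k *m a).
Proof.
move=> au x y /(congr1 (fun M => a *m M *m invmx a)).
by rewrite /= !mulmxA !mulmxK // !mulmxV // !mul1mx.
Qed.

Lemma det_conj (a k : 'M[F]_d) : a \in unitmx -> \det (invmx a *m k *m a) = \det k.
Proof.
move=> au; rewrite !det_mulmx det_inv mulrC mulrA mulrC.
by rewrite mulfV ?mulr1 // -unitfE -unitmxE.
Qed.

Lemma det1_conj (a k : 'M[F]_d) : a \in unitmx -> \det (1%:M + invmx a *m k *m a) = \det (1%:M + k).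
Proof.
move=> au; rewrite -(det_conj (1%:M + k) au); congr determinant.
by rewrite mulmxDr mulmxDl mulmx1 mulVmx.
Qed.

Lemma isO_conj (a k : 'M[F]_d) : isO B a -> isO B (invmx a *m k *m a) = isO B k.
Proof.
move=> Oa; have au := isO_unit Oa.
have aTu : a^T \in unitmx by rewrite unitmx_tr.
have hB : (invmx a)^T *m B *m invmx a = B.
  rewrite -{1}(eqP Oa) !mulmxA -trmx_mul mulmxV // trmx1 mul1mx mulmxK //.
have e : (invmx a *m k *m a)^T *m B *m (invmx a *m k *m a) = a^T *m (k^T *m B *m k) *m a.
  rewrite !trmx_mul -!mulmxA (mulmxA (invmx a)^T) (mulmxA ((invmx a)^T *m B)) hB.
  by rewrite -?mulmxA.
rewrite /isO e -[X in _ *m a == X](eqP Oa); apply/eqP/eqP => [h|->//].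
by rewrite -(mulKmx aTu (_ *m _ *m k)) -(mulmxK au (a^T *m _)) h mulmxK // mulKmx.
Qed.

Lemma isSO_conj (a k : 'M[F]_d) : isO B a -> isSO B (invmx a *m k *m a) = isSO B k.
Proof. by move=> Oa; rewrite /isSO isO_conj // det_conj // isO_unit. Qed.

Lemma isO_hO : isO B (hO B).
Proof.
rewrite /hO; case: pickP => [h /andP [Oh _] | _] //=.
by rewrite /isO trmx1 mul1mx mulmx1.
Qed.

Lemma sum_block (C : fieldType) (I : finType) (P : pred I) m1 m2
  (f : I -> 'M[C]_m1) (g : I -> 'M[C]_m2) :
  \sum_(i | P i) block_mx (f i) 0 0 (g i) =
  block_mx (\sum_(i | P i) f i) 0 0 (\sum_(i | P i) g i).
Proof.
apply: (big_rec3 (fun a b c => a = block_mx b 0 0 c)); first by rewrite block_mx0.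
by move=> i a b c _ ->; rewrite add_block_mx !addr0.
Qed.
End Conj.

Unset Implicit Arguments.

Theorem mainTheorem11 (F : finFieldType) (C : closedFieldType) (sqrtq : C)
  (d : nat) (B : 'M[F]_d) (chi : F -> C) (n : nat) (pi0 : 'M[F]_d -> 'M[C]_n) :
  odd #|F| ->
  (forall l : nat, l \in [pchar C] -> ~~ (l %| #|F|)%N) ->
  sqrtq ^+ 2 = (#|F|)%:R ->
  B^T = B -> \det B != 0 ->
  (forall x y : F, x != 0 -> y != 0 -> chi (x * y) = chi x * chi y) ->
  (forall x : F, x != 0 -> chi x != 0) ->
  is_irrep (isSO B) pi0 ->
  (~~ odd d -> (2 \notin [pchar C])%N) ->
  exists j w : C,
    [/\ JOp B sqrtq chi pi0 = j%:M,
        (~~ odd d -> pi0 (- 1%:M) = w%:M) &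
        GammaSO_eq B sqrtq chi pi0
          ((chi (- 2)) ^- d * j * (if odd d then 1 else w))].
Proof.
move=> oddF _ _ _ detB chiM chiNZ irr _.
have h2 := two_neq0 oddF.
have irr' := irr; case: irr' => [[_ prep] _ _].
set c := lie_sqrt_card B sqrtq.
set P := fun h => isSO B h && (\det (1%:M + h) != 0).
set S := \sum_(h | P h) chi (\det (1%:M + h)) *: pi0 h.
have eJ : JOp B sqrtq chi pi0 = c^-1 *: S by [].
have [j Hj] : exists j, JOp B sqrtq chi pi0 = j%:M.
  apply: (schur_scalar irr) => g Sg.
  rewrite eJ -scalemxAr -scalemxAl; congr (_ *: _).
  rewrite mulmx_sumr mulmx_suml.
  have Og : isO B g by case/andP: Sg.
  have gu := isO_unit detB Og.
  rewrite (eq_bigr (fun h => chi (\det (1%:M + h)) *: pi0 (g *m h))); last first.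
    by move=> h /andP [Sh _]; rewrite -scalemxAr prep.
  rewrite (reindex_inj (conj_inj gu)) /=.
  apply: eq_big => k.
    by rewrite /P isSO_conj // det1_conj.
  move=> /andP [Sk _]; rewrite isSO_conj // in Sk.
  by rewrite det1_conj // !mulmxA mulmxV // mul1mx (prep _ _ Sk Sg) scalemxAl.
have SN1 : ~~ odd d -> isSO B (- 1%:M).
  move=> ev; rewrite /isSO /isO [(- _)^T]linearN /= trmx1 mulNmx mulmxN !mul1mx mulmx1 opprK eqxx.
  by rewrite detN det1 mulr1 -signr_odd (negbTE ev) expr0 eqxx.
have [w Hw] : exists w : C, ~~ odd d -> pi0 (- 1%:M) = w%:M.
  case: (boolP (odd d)) => od; first by exists 0.
  have [w Hw] := schur_scalar irr (A := pi0 (- 1%:M)) (fun g Sg =>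
    etrans (esym (prep _ _ Sg (SN1 od))) (etrans (congr1 pi0 (etrans (mulmxN g 1%:M)
      (esym (etrans (mulNmx 1%:M g) (congr1 -%R (etrans (mul1mx g) (esym (mulmx1 g)))))))) (prep _ _ (SN1 od) Sg))).
  by exists w.
exists j, w; split => //.
have eK : ((chi (- 2%:R)) ^- d * c^-1) *: S = ((chi (- 2)) ^- d * j)%:M.
  by rewrite -scalerA -eJ Hj scale_scalar_mx.
rewrite /GammaSO_eq; case: (boolP (odd d)) => od; rewrite ?od ?(negbTE od).
  rewrite Gamma_formula // mulr1 -eK; congr (_ *: _).
  apply: eq_bigr => h /andP [/andP [Oh /eqP dh] _].
  have m1 : ((-1 : F) == 1) = false.
    by apply/negbTE; rewrite -subr_eq0 -opprD oppr_eq0 -mulr2n.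
  by rewrite /plus_ext /isSO isON Oh detN dh mulr1 -signr_odd od expr1 m1 /= opprK.
have Hw' := Hw od; have S1 := SN1 od.
have O1 : isO B (- 1%:M) by case/andP: S1.
have pm : forall h, isSO B h -> pi0 (- h) = w *: pi0 h.
  move=> h Sh; have -> : - h = - 1%:M *m h by rewrite mulNmx mul1mx.
  by rewrite (prep _ _ S1 Sh) Hw' mul_scalar_mx.
have eT : \sum_(h | P h) chi (\det (1%:M + h)) *: pi0 (- h) = w *: S.
  rewrite scaler_sumr; apply: eq_bigr => h /andP [Sh _].
  by rewrite pm // !scalerA mulrC.
have eF : ((chi (- 2%:R)) ^- d * c^-1) *: (w *: S) = ((chi (- 2)) ^- d * j * w)%:M.
  by rewrite scalerA mulrC -scalerA eK scale_scalar_mx mulrC.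
split.
  move=> pi' [[_ prep'] _ _] ext.
  rewrite Gamma_formula // -eF -eT; congr (_ *: _); apply: eq_bigr => h /andP [Sh _].
  have Oh : isO B h by case/andP: Sh.
  have -> : - h = - 1%:M *m h by rewrite mulNmx mul1mx.
  by rewrite (prep' _ _ O1 Oh) (prep _ _ S1 Sh) !ext.
move=> _; rewrite Gamma_formula //.
have isSON : forall h, isSO B h -> isSO B (- h).
  move=> h /andP [Oh dh]; rewrite /isSO isON Oh detN -signr_odd (negbTE od) expr0 mul1r.
  exact: dh.
rewrite (eq_bigr (fun h => block_mx (chi (\det (1%:M + h)) *: pi0 (- h)) 0 0
   (chi (\det (1%:M + h)) *: pi0 (hO B *m - h *m invmx (hO B))))); last first.
  by move=> h /andP [Sh _]; rewrite /IndSO isSON // scale_block_mx !scaler0.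
rewrite sum_block.
have OhO := isO_hO B.
have hOu := isO_unit detB OhO.
have e2 : \sum_(h | P h) chi (\det (1%:M + h)) *: pi0 (hO B *m - h *m invmx (hO B))
    = \sum_(h | P h) chi (\det (1%:M + h)) *: pi0 (- h).
  rewrite (reindex_inj (conj_inj hOu)) /=.
  apply: eq_big => k; first by rewrite /P isSO_conj // det1_conj.
  move=> _; rewrite det1_conj //; congr (_ *: pi0 _).
  by rewrite mulmxN mulNmx !mulmxA mulmxV // mul1mx mulmxK.
by rewrite e2 eT scale_block_mx scaler0 eF -scalar_mx_block.
Qed.
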